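(* Under the setting of the algorithm in the context, fix $\delta>0$ and set, for each $i$, $$\epsilon_i=\delta\frac{q_i}{c_i(q_i-|s_i-1|)}.$$ Then for every $i_0\in\{1,\dots,n\}$, every pair of initial states $\theta_0^{(1)},\theta_0^{(2)}$ with $|\theta^{(2)}_{0,i_0}-\theta^{(1)}_{0,i_0}|\le\delta$ and $\theta^{(2)}_{0,i}=\theta^{(1)}_{0,i}$ for $i\neq i_0$, and every Borel set $\mathcal{O}\subseteq(\mathbb{R}^n)^{\mathbb{N}}$, $$\mathbb{P}\{\boldsymbol\eta: X_{\theta_0^{(1)}}(\boldsymbol\eta)\in\mathcal{O}\}\le e^{\epsilon_{i_0}}\,\mathbb{P}\{\boldsymbol\eta: X_{\theta_0^{(2)}}(\boldsymbol\eta)\in\mathcal{O}\}.$$ Consequently the algorithm is $\epsilon$-differentially private with $\epsilon=\max_i\epsilon_i$.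
   Context: $n$ agents communicate over an undirected connected weighted graph with symmetric nonnegative adjacency matrix $A$, weighted degree matrix $D=\mathrm{diag}(A\mathbf{1}_n)$, Laplacian $L=D-A$, and maximal weighted degree $d_{\max}$. The algorithm is $$\theta(k+1)=\theta(k)-hLx(k)+S\eta(k),\qquad x(k)=\theta(k)+\eta(k),\qquad \theta(0)=\theta_0,$$ where $0<h<1/d_{\max}$, $S=\mathrm{diag}(s_1,\dots,s_n)$ with $s_i\in(0,2)$, and the noises $\eta_i(k)$ are mutually independent with $\eta_i(k)\sim\mathrm{Lap}(c_iq_i^k)$ (zero-mean Laplace with density $\frac{1}{2b}e^{-|x|/b}$), $c_i>0$, $q_i\in(|s_i-1|,1)$. For fixed $\theta_0$, $X_{\theta_0}:(\mathbb{R}^n)^{\mathbb{N}}\to(\mathbb{R}^n)^{\mathbb{N}}$ maps the noise sequence $\boldsymbol\eta=\{\eta(k)\}_{k\ge0}$ to the message sequence $\{x(k)\}_{k\ge0}$. Initial states are $\delta$-adjacent if they differ in at most one component by at most $\delta$; the algorithm is $\epsilon$-differentially private if the displayed inequality holds with $e^{\epsilon}$ for all $\delta$-adjacent pairs and all Borel $\mathcal{O}$ (product topology). *)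

(* Defs.v *)
From Stdlib Require Import Reals Lra Relations.
Open Scope R_scope.

Fixpoint rsum (n : nat) (f : nat -> R) : R :=
  match n with O => 0 | S m => rsum m f + f m end.

Fixpoint rprod (n : nat) (f : nat -> R) : R :=
  match n with O => 1 | S m => rprod m f * f m end.

Fixpoint rmax_upto (n : nat) (f : nat -> R) : R :=
  match n with O => 0 | S m => Rmax (rmax_upto m f) (f m) end.

(* Vectors of R^n are nat -> R (only indices < n matter); matrices nat -> nat -> R. *)
Definition vec := nat -> R.
Definition vseq := nat -> vec.

Definition symmetric_nonneg (n : nat) (A : nat -> nat -> R) : Prop :=
  forall i j, (i < n)%nat -> (j < n)%nat -> A i j = A j i /\ 0 <= A i j.

Definition edge (n : nat) (A : nat -> nat -> R) (i j : nat) : Prop :=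
  (i < n)%nat /\ (j < n)%nat /\ 0 < A i j.

Definition connected (n : nat) (A : nat -> nat -> R) : Prop :=
  forall i j, (i < n)%nat -> (j < n)%nat -> clos_refl_trans nat (edge n A) i j.

Definition degree (n : nat) (A : nat -> nat -> R) (i : nat) : R :=
  rsum n (fun j => A i j).

Definition dmax (n : nat) (A : nat -> nat -> R) : R := rmax_upto n (degree n A).

Definition lap (n : nat) (A : nat -> nat -> R) (x : vec) : vec :=
  fun i => degree n A i * x i - rsum n (fun j => A i j * x j).

Fixpoint theta (n : nat) (A : nat -> nat -> R) (h : R) (s : nat -> R)
    (theta0 : vec) (eta : vseq) (k : nat) : vec :=
  match k with
  | O => theta0
  | S k' =>
      let th := theta n A h s theta0 eta k' in
      let x := fun i => th i + eta k' i in
      fun i => th i - h * lap n A x i + s i * eta k' i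
  end.

Definition Xmap (n : nat) (A : nat -> nat -> R) (h : R) (s : nat -> R)
    (theta0 : vec) (eta : vseq) : vseq :=
  fun k i => theta n A h s theta0 eta k i + eta k i.

(* CDF of the zero-mean Laplace law Lap(b), density exp(-|x|/b)/(2b) *)
Definition laplace_cdf (b t : R) : R :=
  if Rlt_dec t 0 then exp (t / b) / 2 else 1 - exp (- t / b) / 2.

Definition rect (n K : nat) (a b : vseq) : vseq -> Prop :=
  fun eta => forall k i, (k < K)%nat -> (i < n)%nat -> a k i < eta k i <= b k i.

Definition is_sigma_algebra (S : (vseq -> Prop) -> Prop) : Prop :=
  S (fun _ => True) /\
  (forall E, S E -> S (fun x => ~ E x)) /\
  (forall F : nat -> vseq -> Prop, (forall m, S (F m)) -> S (fun x => exists m, F m x)).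

(* Borel sets of (R^n)^N with the product topology = the sigma-algebra generated
   by the cylinder rectangles (countable product of second countable spaces). *)
Definition borel (n : nat) (E : vseq -> Prop) : Prop :=
  forall S, is_sigma_algebra S -> (forall K a b, S (rect n K a b)) -> S E.

(* P is the law of the noise sequence eta: a (countably additive, nonnegative)
   probability measure on the Borel sets under which the eta_i(k) are
   independent with eta_i(k) ~ Lap(c_i q_i^k).  It is specified on cylinder
   rectangles, which determines it uniquely on Borel sets (pi-lambda). *)
Definition noise_law (n : nat) (c q : nat -> R) (P : (vseq -> Prop) -> R) : Prop :=
  (forall E, borel n E -> 0 <= P E) /\
  (forall F : nat -> vseq -> Prop,
      (forall m, borel n (F m)) ->
      (forall m1 m2 x, m1 <> m2 -> F m1 x -> F m2 x -> False) ->
      infinite_sum (fun m => P (F m)) (P (fun x => exists m, F m x))) /\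
  (forall K a b, (forall k i, (k < K)%nat -> (i < n)%nat -> a k i <= b k i) ->
      P (rect n K a b) =
      rprod K (fun k => rprod n (fun i =>
         laplace_cdf (c i * q i ^ k) (b k i) - laplace_cdf (c i * q i ^ k) (a k i)))).

Definition adjacent (n : nat) (delta : R) (t1 t2 : vec) : Prop :=
  exists i0, (i0 < n)%nat /\ Rabs (t2 i0 - t1 i0) <= delta /\
    forall i, (i < n)%nat -> i <> i0 -> t2 i = t1 i.

Definition diff_private (n : nat) (A : nat -> nat -> R) (h : R) (s : nat -> R)
    (P : (vseq -> Prop) -> R) (delta eps : R) : Prop :=
  forall t1 t2 O, adjacent n delta t1 t2 -> borel n O ->
    P (fun eta => O (Xmap n A h s t1 eta))
      <= exp eps * P (fun eta => O (Xmap n A h s t2 eta)).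

Definition eps_i (delta : R) (s c q : nat -> R) (i : nat) : R :=
  delta * q i / (c i * (q i - Rabs (s i - 1))).

(* Main.v *)
Require Import Defs.
From Stdlib Require Import Reals Lra Lia ZArith List FunctionalExtensionality PropExtensionality Classical.
Import ListNotations.
Open Scope R_scope.


Lemma set_ext (E F : vseq -> Prop) : (forall x, E x <-> F x) -> E = F.
Proof. intro H; apply functional_extensionality; intro x; apply propositional_extensionality; auto. Qed.

Section BorelLemmas.
Variable n : nat.

Lemma borel_sigma : is_sigma_algebra (borel n).
Proof.
  split; [|split].
  - intros S HS Hr; apply HS.
  - intros E HE S HS Hr. apply HS. apply HE; auto.
  - intros F HF S HS Hr. apply HS. intro m. apply HF; auto.
Qed.

Lemma borel_rect K a b : borel n (rect n K a b).
Proof. intros S HS Hr; apply Hr. Qed.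

Lemma borel_True : borel n (fun _ => True).
Proof. apply borel_sigma. Qed.

Lemma borel_compl E : borel n E -> borel n (fun x => ~ E x).
Proof. apply borel_sigma. Qed.

Lemma borel_Union (F : nat -> vseq -> Prop) : (forall m, borel n (F m)) -> borel n (fun x => exists m, F m x).
Proof. apply borel_sigma. Qed.

Lemma borel_False : borel n (fun _ => False).
Proof.
  replace (fun _ : vseq => False) with (fun x : vseq => ~ (fun _ : vseq => True) x).
  apply borel_compl, borel_True. apply set_ext; intros; tauto.
Qed.

Lemma borel_ext E F : borel n E -> (forall x, E x <-> F x) -> borel n F.
Proof. intros H HE; replace F with E; auto; apply set_ext; auto. Qed.

Lemma borel_or E F : borel n E -> borel n F -> borel n (fun x => E x \/ F x).
Proof.
  intros HE HF.
  apply borel_ext with (fun x => exists m, (match m with O => E | _ => F end) x).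
  apply borel_Union; intros [|m]; auto.
  intros x; split. intros [[|m] H]; auto. intros [H|H]. exists O; auto. exists 1%nat; auto.
Qed.

Lemma borel_and E F : borel n E -> borel n F -> borel n (fun x => E x /\ F x).
Proof.
  intros HE HF.
  apply borel_ext with (fun x => ~ ((fun x => ~ E x) x \/ (fun x => ~ F x) x)).
  apply borel_compl, borel_or; apply borel_compl; auto.
  intros x; split. intros H. apply Classical_Prop.NNPP. tauto. tauto.
Qed.

Lemma borel_Inter (F : nat -> vseq -> Prop) : (forall m, borel n (F m)) -> borel n (fun x => forall m, F m x).
Proof.
  intros HF.
  apply borel_ext with (fun x => ~ (exists m, (fun x => ~ F m x) x)).
  apply borel_compl, borel_Union; intro m; apply borel_compl; auto.
  intros x; split. intros H m. apply Classical_Prop.NNPP. intro H'. apply H. exists m; auto.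
  intros H [m Hm]. apply Hm; auto.
Qed.

Lemma borel_forall_lt K (F : nat -> vseq -> Prop) : (forall k, (k < K)%nat -> borel n (F k)) ->
  borel n (fun x => forall k, (k < K)%nat -> F k x).
Proof.
  induction K; intros HF.
  - apply borel_ext with (fun _ => True). apply borel_True. intros x; split; auto; intros; lia.
  - apply borel_ext with (fun x => (fun x => forall k, (k < K)%nat -> F k x) x /\ F K x).
    apply borel_and; auto.
    intros x; split. intros [H1 H2] k Hk. destruct (Nat.eq_dec k K). subst; auto. apply H1; lia.
    intros H; split; auto.
Qed.

Lemma borel_exists_lt K (F : nat -> vseq -> Prop) : (forall k, (k < K)%nat -> borel n (F k)) ->
  borel n (fun x => exists k, (k < K)%nat /\ F k x).
Proof.
  intros HF.
  apply borel_ext with (fun x => exists m, (fun x => (m < K)%nat /\ F m x) x).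
  apply borel_Union. intros m. destruct (Nat.lt_ge_cases m K).
  apply borel_ext with (F m); auto. intros; tauto.
  apply borel_ext with (fun _ => False). apply borel_False. intros x; split; [tauto | intros [H1 H2]; lia].
  intros; tauto.
Qed.

Lemma borel_preimage (g : vseq -> vseq) :
  (forall K a b, borel n (fun x => rect n K a b (g x))) ->
  forall E, borel n E -> borel n (fun x => E (g x)).
Proof.
  intros Hg E HE. apply HE.
  - split; [|split].
    + apply borel_True.
    + intros F HF. apply borel_compl; auto.
    + intros F HF. apply borel_Union; auto.
  - auto.
Qed.

End BorelLemmas.

Lemma Z_as_nat_diff z : exists m1 m2, IZR z = INR m1 - INR m2.
Proof.
  destruct z as [|p|p].
  - exists 0%nat, 0%nat; simpl; lra.
  - exists (Pos.to_nat p), 0%nat. rewrite (INR_IZR_INZ (Pos.to_nat p)), positive_nat_Z. simpl; lra.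
  - exists 0%nat, (Pos.to_nat p). rewrite (INR_IZR_INZ (Pos.to_nat p)), positive_nat_Z.
    change (IZR (Zneg p)) with (- IZR (Zpos p)). simpl; lra.
Qed.

Lemma density u v : u < v -> exists m1 m2 p, u < (INR m1 - INR m2) / INR (S p) < v.
Proof.
  intros Huv.
  destruct (archimed_cor1 (v - u)) as [N [HN HN0]]; [lra|].
  destruct N as [|p]; [lia|].
  destruct (archimed (u * INR (S p))) as [H1 H2].
  destruct (Z_as_nat_diff (up (u * INR (S p)))) as [m1 [m2 Hm]].
  exists m1, m2, p. rewrite <- Hm.
  assert (Hp : 0 < INR (S p)) by (apply lt_0_INR; lia).
  split.
  - apply Rmult_lt_reg_r with (INR (S p)); auto. unfold Rdiv. rewrite Rmult_assoc, Rinv_l by lra. lra.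
  - apply Rle_lt_trans with (u + / INR (S p)); [|lra].
    apply Rmult_le_reg_r with (INR (S p)); auto. unfold Rdiv. rewrite Rmult_assoc, Rinv_l by lra.
    rewrite Rmult_plus_distr_r, Rinv_l by lra. lra.
Qed.

Lemma exists_big x : exists M : nat, x < INR M.
Proof.
  destruct (INR_archimed 1 x) as [M HM]; [lra|]. exists M; lra.
Qed.

Lemma bound_fin (g : nat -> nat -> R) K N : exists M : nat, forall k i, (k < K)%nat -> (i < N)%nat -> Rabs (g k i) < INR M.
Proof.
  induction K.
  - exists 0%nat; intros; lia.
  - destruct IHK as [M1 HM1].
    assert (Hrow : exists M : nat, forall i, (i < N)%nat -> Rabs (g K i) < INR M).
    { clear HM1. induction N.
      - exists 0%nat; intros; lia.
      - destruct IHN as [M2 HM2]. destruct (exists_big (Rabs (g K N))) as [M3 HM3].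
        exists (Nat.max M2 M3). intros i Hi.
        destruct (Nat.eq_dec i N).
        + subst. apply Rlt_le_trans with (INR M3); auto. apply le_INR; lia.
        + apply Rlt_le_trans with (INR M2). apply HM2; lia. apply le_INR; lia. }
    destruct Hrow as [M2 HM2]. exists (Nat.max M1 M2). intros k i Hk Hi.
    destruct (Nat.eq_dec k K).
    + subst. apply Rlt_le_trans with (INR M2); auto. apply le_INR; lia.
    + apply Rlt_le_trans with (INR M1). apply HM1; lia. apply le_INR; lia.
Qed.

Section MF.
Variable n : nat.

Definition mf (f : vseq -> R) : Prop := forall t, borel n (fun x => f x <= t).

Lemma mf_ext f g : mf f -> (forall x, f x = g x) -> mf g.
Proof. intros H E. replace g with f; auto. apply functional_extensionality; auto. Qed.

Lemma mf_lt f t : mf f -> borel n (fun x => f x < t).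
Proof.
  intros Hf.
  apply borel_ext with (fun x => exists m, (fun x => f x <= t - / INR (S m)) x).
  apply borel_Union; intros m; apply Hf.
  intros x; split.
  - intros [m Hm]. assert (0 < / INR (S m)) by (apply Rinv_0_lt_compat, lt_0_INR; lia). lra.
  - intros H. destruct (archimed_cor1 (t - f x)) as [N [HN HN0]]; [lra|].
    destruct N as [|m]; [lia|]. exists m. lra.
Qed.

Lemma mf_gt f t : mf f -> borel n (fun x => t < f x).
Proof.
  intros Hf. apply borel_ext with (fun x => ~ (fun x => f x <= t) x).
  apply borel_compl, Hf. intros x; split; intros; lra.
Qed.

Lemma mf_ge f t : mf f -> borel n (fun x => t <= f x).
Proof.
  intros Hf. apply borel_ext with (fun x => ~ (fun x => f x < t) x).
  apply borel_compl, mf_lt, Hf. intros x; split; intros; lra.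
Qed.

Lemma mf_const c : mf (fun _ => c).
Proof.
  intros t. destruct (Rle_dec c t).
  - apply borel_ext with (fun _ => True). apply borel_True. intros; split; auto.
  - apply borel_ext with (fun _ => False). apply borel_False. intros; split; intros; [tauto|lra].
Qed.

Lemma mf_coord k i : (i < n)%nat -> mf (fun x => x k i).
Proof.
  intros Hi t.
  apply borel_ext with (fun x => exists M, rect n (S k) (fun _ _ => - INR M)
     (fun k' i' => if andb (Nat.eqb k' k) (Nat.eqb i' i) then t else INR M) x).
  apply borel_Union; intros; apply borel_rect.
  intros x; split.
  - intros [M HM]. destruct (HM k i ltac:(lia) Hi) as [_ H].
    rewrite !Nat.eqb_refl in H. simpl in H. exact H.
  - intros Hx. destruct (bound_fin x (S k) n) as [M HM].
    exists M. intros k' i' Hk' Hi'. specialize (HM k' i' Hk' Hi').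
    apply Rabs_def2 in HM. split; [lra|].
    destruct (Nat.eqb k' k) eqn:E1; destruct (Nat.eqb i' i) eqn:E2; simpl; try lra.
    apply Nat.eqb_eq in E1, E2. subst. exact Hx.
Qed.

Lemma mf_plus f g : mf f -> mf g -> mf (fun x => f x + g x).
Proof.
  intros Hf Hg t.
  set (r := fun m1 m2 p : nat => (INR m1 - INR m2) / INR (S p)).
  apply borel_ext with (fun x => ~ (exists m1, (fun x => exists m2, (fun x => exists p,
     (fun x => r m1 m2 p < f x /\ t - r m1 m2 p < g x) x) x) x)).
  - apply borel_compl. apply borel_Union; intro m1. apply borel_Union; intro m2.
    apply borel_Union; intro p. apply borel_and; [apply mf_gt|apply mf_gt]; auto.
  - intros x; split.
    + intros H. destruct (Rle_dec (f x + g x) t); auto. exfalso; apply H.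
      destruct (density (t - g x) (f x)) as [m1 [m2 [p Hp]]]; [lra|].
      exists m1, m2, p. unfold r. lra.
    + intros H [m1 [m2 [p Hp]]]. lra.
Qed.

Lemma mf_scal c f : mf f -> mf (fun x => c * f x).
Proof.
  intros Hf t.
  destruct (Rtotal_order c 0) as [Hc|[Hc|Hc]].
  - apply borel_ext with (fun x => t / c <= f x). apply mf_ge; auto.
    intros x. split; intros H.
    + assert (H0 : c * f x <= c * (t / c)) by (apply Rmult_le_compat_neg_l; lra).
      replace (c * (t / c)) with t in H0 by (field; lra). exact H0.
    + apply Rmult_le_reg_l with (- c); [lra|].
      replace (- c * f x) with (- (c * f x)) by ring.
      replace (- c * (t / c)) with (- t) by (field; lra). lra.
  - subst. apply mf_ext with (fun _ => 0). apply mf_const. intros; ring.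
  - apply borel_ext with (fun x => f x <= t / c). apply Hf.
    intros x. split; intros H.
    + assert (H0 : c * f x <= c * (t / c)) by (apply Rmult_le_compat_l; lra).
      assert (E : c * (t / c) = t) by (field; lra). rewrite E in H0. exact H0.
    + apply Rmult_le_reg_l with c; [lra|].
      assert (E : c * (t / c) = t) by (field; lra). rewrite E. exact H.
Qed.

Lemma mf_minus f g : mf f -> mf g -> mf (fun x => f x - g x).
Proof.
  intros Hf Hg. apply mf_ext with (fun x => f x + (-1) * g x).
  apply mf_plus; auto. apply mf_scal; auto. intros; ring.
Qed.

Lemma mf_mult_const f c : mf f -> mf (fun x => f x * c).
Proof. intros Hf. apply mf_ext with (fun x => c * f x). apply mf_scal; auto. intros; ring. Qed.

Lemma mf_rsum m (f : vseq -> nat -> R) : (forall j, (j < m)%nat -> mf (fun x => f x j)) ->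
  mf (fun x => rsum m (f x)).
Proof.
  induction m; intros Hf; simpl.
  - apply mf_const.
  - apply mf_plus. apply IHm; intros; apply Hf; lia. apply Hf; lia.
Qed.

Lemma borel_preimage_mf (g : vseq -> vseq) :
  (forall k i, (i < n)%nat -> mf (fun x => g x k i)) ->
  forall E, borel n E -> borel n (fun x => E (g x)).
Proof.
  intros Hg. apply borel_preimage. intros K a b.
  apply borel_ext with (fun x => forall k, (k < K)%nat -> (fun x => forall i, (i < n)%nat ->
      (fun x => a k i < g x k i /\ g x k i <= b k i) x) x).
  - apply borel_forall_lt; intros k Hk. apply borel_forall_lt; intros i Hi.
    apply borel_and. apply mf_gt, Hg; auto. apply Hg; auto.
  - intros x; unfold rect; split; intros H; intros; apply H; auto.
Qed.

End MF.

Definition is_meas (n : nat) (m : (vseq -> Prop) -> R) : Prop :=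
  (forall E, borel n E -> 0 <= m E) /\
  (forall F : nat -> vseq -> Prop,
      (forall k, borel n (F k)) ->
      (forall m1 m2 x, m1 <> m2 -> F m1 x -> F m2 x -> False) ->
      infinite_sum (fun k => m (F k)) (m (fun x => exists k, F k x))).

Definition Ufin (E : nat -> vseq -> Prop) (M : nat) : vseq -> Prop :=
  fun x => exists j, (j < M)%nat /\ E j x.

Lemma sum_const c N : sum_f_R0 (fun _ => c) N = INR (S N) * c.
Proof. induction N; simpl sum_f_R0. simpl; ring. rewrite IHN. rewrite !S_INR. ring. Qed.

Lemma sum_two (s : nat -> R) N : (forall k, (2 <= k)%nat -> s k = 0) -> sum_f_R0 s (S N) = s 0%nat + s 1%nat.
Proof.
  intros H. induction N. simpl; ring. simpl sum_f_R0 in *. rewrite IHN, (H (S (S N))) by lia. ring.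
Qed.

Lemma infinite_sum_eventually (s : nat -> R) L l N0 : (forall N, (N0 <= N)%nat -> sum_f_R0 s N = L) ->
  infinite_sum s l -> l = L.
Proof.
  intros H Hs. apply (uniqueness_sum s); auto.
  intros eps Heps. exists N0. intros N HN. rewrite H by lia. unfold Rdist. rewrite Rminus_diag, Rabs_R0. lra.
Qed.

Section Meas.
Variable n : nat.
Variable m : (vseq -> Prop) -> R.
Hypothesis Hm : is_meas n m.

Lemma meas_ext X Y : (forall x, X x <-> Y x) -> m X = m Y.
Proof. intros H. f_equal. apply set_ext; auto. Qed.

Lemma meas_nonneg X : borel n X -> 0 <= m X.
Proof. apply Hm. Qed.

Lemma meas_empty : m (fun _ => False) = 0.
Proof.
  destruct Hm as [H0 Hs].
  specialize (Hs (fun _ _ => False) (fun _ => borel_False n) ltac:(auto)).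
  cbv beta in Hs.
  rewrite (set_ext (fun x : vseq => exists _ : nat, False) (fun _ : vseq => False)) in Hs
    by (intros; split; [intros [? ?]; tauto| tauto]).
  set (c := m (fun _ => False)) in *.
  assert (Hc : 0 <= c) by (apply H0, borel_False).
  destruct (Req_dec c 0) as [E|E]; auto. exfalso.
  destruct (Hs (c / 2)) as [N HN]; [lra|].
  specialize (HN (S N) ltac:(lia)). rewrite sum_const in HN. unfold Rdist in HN.
  rewrite !S_INR in HN. assert (0 <= INR N) by apply pos_INR.
  assert (Hc' : 0 < c) by (destruct Hc; [auto| congruence]).
  replace ((INR N + 1 + 1) * c - c) with ((INR N + 1) * c) in HN by ring.
  rewrite Rabs_right in HN by nra. nra.
Qed.

Lemma meas_add2 X Y : borel n X -> borel n Y -> (forall x, X x -> Y x -> False) ->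
  m (fun x => X x \/ Y x) = m X + m Y.
Proof.
  intros HX HY Hd. destruct Hm as [H0 Hs].
  set (F := fun k : nat => match k with O => X | 1%nat => Y | _ => fun _ : vseq => False end).
  assert (HF : forall k, borel n (F k)). { intros [|[|k]]; simpl; auto. apply borel_False. }
  assert (HD : forall m1 m2 x, m1 <> m2 -> F m1 x -> F m2 x -> False).
  { intros [|[|m1]] [|[|m2]] x Hne; simpl; try tauto; try lia; eauto. }
  specialize (Hs F HF HD).
  replace (fun x => exists k, F k x) with (fun x => X x \/ Y x) in Hs.
  - apply (infinite_sum_eventually _ (m X + m Y) _ 1%nat) in Hs; auto.
    intros N HN. destruct N; [lia|]. rewrite sum_two. reflexivity.
    intros [|[|k]] Hk; try lia. simpl. apply meas_empty.
  - apply set_ext. intros x; split.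
    + intros [H|H]. exists O; auto. exists 1%nat; auto.
    + intros [[|[|k]] H]; simpl in H; tauto.
Qed.

Lemma meas_mono X Y : borel n X -> borel n Y -> (forall x, X x -> Y x) -> m X <= m Y.
Proof.
  intros HX HY Hs.
  rewrite (meas_ext Y (fun x => X x \/ (fun x => Y x /\ ~ X x) x)).
  rewrite meas_add2; auto.
  assert (0 <= m (fun x => Y x /\ ~ X x)). apply meas_nonneg, borel_and; auto. apply borel_compl; auto.
  lra. apply borel_and; auto. apply borel_compl; auto. intros x H1 [H2 H3]; auto.
  intros x; split. intros H. destruct (Classical_Prop.classic (X x)); auto.
  intros [H|[H _]]; auto.
Qed.

Lemma meas_sub X Y : borel n X -> borel n Y -> m (fun x => X x \/ Y x) <= m X + m Y.
Proof.
  intros HX HY.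
  rewrite (meas_ext _ (fun x => X x \/ (fun x => Y x /\ ~ X x) x)).
  rewrite meas_add2; auto.
  assert (m (fun x => Y x /\ ~ X x) <= m Y). apply meas_mono; auto. apply borel_and; auto. apply borel_compl; auto.
  intros x [? ?]; auto. lra.
  apply borel_and; auto. apply borel_compl; auto. intros x H1 [H2 H3]; auto.
  intros x; split. intros [H|H]; auto. destruct (Classical_Prop.classic (X x)); auto.
  intros [H|[H _]]; auto.
Qed.

Lemma borel_Ufin E M : (forall j, borel n (E j)) -> borel n (Ufin E M).
Proof. intros HE. apply borel_exists_lt; auto. Qed.

Lemma meas_cont (E : nat -> vseq -> Prop) : (forall j, borel n (E j)) ->
  forall eps, 0 < eps -> exists M, m (fun x => exists j, E j x) - m (Ufin E M) < eps.
Proof.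
  intros HE eps Heps. destruct Hm as [H0 Hs].
  set (G := fun j x => E j x /\ ~ (exists i, (i < j)%nat /\ E i x)).
  assert (HG : forall j, borel n (G j)).
  { intros j. apply borel_and; auto. apply borel_compl, borel_exists_lt; auto. }
  assert (HD : forall m1 m2 x, m1 <> m2 -> G m1 x -> G m2 x -> False).
  { intros m1 m2 x Hne [H1 H1'] [H2 H2'].
    destruct (Nat.lt_ge_cases m1 m2). apply H2'; exists m1; auto. apply H1'; exists m2; split; auto; lia. }
  specialize (Hs G HG HD).
  assert (HU : (fun x => exists k, G k x) = (fun x => exists j, E j x)).
  { apply set_ext; intros x; split.
    - intros [k [Hk _]]; eauto.
    - intros [j Hj]. revert Hj. induction j as [j IH] using (well_founded_induction lt_wf). intros Hj.
      destruct (Classical_Prop.classic (exists i, (i < j)%nat /\ E i x)) as [[i [Hi Hi']]|Hno].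
      + apply (IH i); auto.
      + exists j; split; auto. }
  rewrite HU in Hs.
  assert (Hpart : forall N, sum_f_R0 (fun k => m (G k)) N = m (Ufin E (S N))).
  { induction N.
    - simpl. apply meas_ext. intros x; split.
      + intros [H _]. exists O; split; auto.
      + intros [j [Hj H]]. assert (j = O) by lia. subst. split; auto. intros [i [Hi _]]; lia.
    - simpl sum_f_R0. rewrite IHN. rewrite <- meas_add2; auto.
      + apply meas_ext. intros x; unfold Ufin; split.
        * intros [[j [Hj H]]|[H _]]. exists j; split; auto; lia. exists (S N); split; auto.
        * intros [j [Hj H]]. destruct (Classical_Prop.classic (exists i, (i < S N)%nat /\ E i x)) as [Hy|Hno].
          left; auto. right. assert (j = S N). { destruct (Nat.eq_dec j (S N)); auto. exfalso; apply Hno; exists j; split; auto; lia. }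
          subst; split; auto.
      + apply borel_Ufin; auto.
      + intros x Hx [_ H]; apply H; auto. }
  destruct (Hs eps Heps) as [N HN]. exists (S N).
  specialize (HN N ltac:(lia)). rewrite Hpart in HN. unfold Rdist in HN.
  apply Rabs_def2 in HN. lra.
Qed.

End Meas.

Definition constr := (nat * nat * option R * option R)%type.

Definition sat (c : constr) (x : vseq) : Prop :=
  let '(k, i, lo, hi) := c in
  (match lo with Some a => a < x k i | None => True end) /\
  (match hi with Some b => x k i <= b | None => True end).

Fixpoint boxs (l : list constr) (x : vseq) : Prop :=
  match l with [] => True | c :: l' => sat c x /\ boxs l' x end.

Fixpoint UL (L : list (list constr)) (x : vseq) : Prop :=
  match L with [] => False | b :: L' => boxs b x \/ UL L' x end.

Definition cvalid (n : nat) (c : constr) : Prop := let '(k, i, _, _) := c in (i < n)%nat.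
Definition bvalid n (l : list constr) : Prop := forall c, In c l -> cvalid n c.
Definition Lvalid n (L : list (list constr)) : Prop := forall b, In b L -> bvalid n b.

Fixpoint disj (L : list (list constr)) : Prop :=
  match L with [] => True | b :: L' => (forall x, boxs b x -> UL L' x -> False) /\ disj L' end.

Section Boxes.
Variable n : nat.

Lemma borel_sat c : cvalid n c -> borel n (sat c).
Proof.
  destruct c as [[[k i] lo] hi]. simpl. intros Hi.
  apply borel_and.
  - destruct lo. apply (mf_gt n (fun x => x k i)). apply mf_coord; auto. apply borel_True.
  - destruct hi. apply (mf_coord n k i Hi). apply borel_True.
Qed.

Lemma borel_boxs l : bvalid n l -> borel n (boxs l).
Proof.
  induction l; intros Hv; simpl.
  - apply borel_True.
  - apply borel_and. apply borel_sat, Hv; simpl; auto. apply IHl. intros c Hc; apply Hv; simpl; auto.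
Qed.

Lemma borel_UL L : Lvalid n L -> borel n (UL L).
Proof.
  induction L; intros Hv; simpl.
  - apply borel_False.
  - apply borel_or. apply borel_boxs, Hv; simpl; auto. apply IHL. intros b Hb; apply Hv; simpl; auto.
Qed.

Lemma UL_app L1 L2 x : UL (L1 ++ L2) x <-> UL L1 x \/ UL L2 x.
Proof. induction L1; simpl; tauto. Qed.

Lemma disj_app L1 L2 : disj L1 -> disj L2 -> (forall x, UL L1 x -> UL L2 x -> False) -> disj (L1 ++ L2).
Proof.
  induction L1; simpl; auto.
  intros [H1 H2] HL2 Hx. split.
  - intros x Hb HU. apply UL_app in HU. destruct HU; eauto.
  - apply IHL1; eauto.
Qed.

Lemma Lvalid_app L1 L2 : Lvalid n L1 -> Lvalid n L2 -> Lvalid n (L1 ++ L2).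
Proof. intros H1 H2 b Hb. apply in_app_iff in Hb. destruct Hb; auto. Qed.

Lemma boxs_app b1 b2 x : boxs (b1 ++ b2) x <-> boxs b1 x /\ boxs b2 x.
Proof. induction b1; simpl; tauto. Qed.

Definition compl_c (c : constr) : list (list constr) :=
  let '(k, i, lo, hi) := c in
  (match lo with Some a => [[(k, i, None, Some a)]] | None => [] end) ++
  (match hi with Some b => [[(k, i, lo, None); (k, i, Some b, None)]] | None => [] end).

Lemma UL_compl_c c x : UL (compl_c c) x <-> ~ sat c x.
Proof.
  destruct c as [[[k i] lo] hi]. unfold compl_c. rewrite UL_app.
  destruct lo as [a|]; destruct hi as [b|]; simpl; split; intros; try lra; try tauto;
  try (destruct (Rlt_dec a (x k i)); destruct (Rle_dec (x k i) b); try tauto; lra);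
  try (destruct (Rlt_dec a (x k i)); try tauto; lra);
  try (destruct (Rle_dec (x k i) b); try tauto; lra).
Qed.

Lemma disj_compl_c c : disj (compl_c c).
Proof.
  destruct c as [[[k i] lo] hi]. unfold compl_c.
  destruct lo as [a|]; destruct hi as [b|]; simpl; repeat split; try tauto.
  intros x [[_ H1] _] [[[H2 _] _]|[]]. lra.
Qed.

Lemma Lvalid_compl_c c : cvalid n c -> Lvalid n (compl_c c).
Proof.
  destruct c as [[[k i] lo] hi]. simpl. intros Hi.
  destruct lo as [a|]; destruct hi as [b|]; simpl; intros B HB; simpl in HB;
    repeat (destruct HB as [HB|HB]); subst; try tauto; intros c Hc; simpl in Hc;
    repeat (destruct Hc as [Hc|Hc]); subst; simpl; auto; tauto.
Qed.

Lemma UL_map_app b L x : UL (map (fun b2 => b ++ b2) L) x <-> boxs b x /\ UL L x.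
Proof. induction L; simpl. tauto. rewrite boxs_app. tauto. Qed.

Lemma disj_map_app b L : disj L -> disj (map (fun b2 => b ++ b2) L).
Proof.
  induction L; simpl; auto. intros [H1 H2]. split; auto.
  intros x Hx HU. apply UL_map_app in HU. apply boxs_app in Hx. destruct Hx, HU. eauto.
Qed.

Lemma Lvalid_map_app b L : bvalid n b -> Lvalid n L -> Lvalid n (map (fun b2 => b ++ b2) L).
Proof.
  intros Hb HL B HB. apply in_map_iff in HB. destruct HB as [b2 [E Hb2]]. subst.
  intros c Hc. apply in_app_iff in Hc. destruct Hc; [apply Hb|apply (HL b2)]; auto.
Qed.

Fixpoint compl_box (l : list constr) : list (list constr) :=
  match l with
  | [] => []
  | c :: l' => compl_c c ++ map (fun b2 => [c] ++ b2) (compl_box l')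
  end.

Lemma UL_compl_box l x : UL (compl_box l) x <-> ~ boxs l x.
Proof.
  induction l as [|a l IHl]. simpl; tauto. cbn [compl_box].
  rewrite UL_app, UL_map_app, UL_compl_c, IHl. simpl.
  destruct (Classical_Prop.classic (sat a x)); tauto.
Qed.

Lemma disj_compl_box l : disj (compl_box l).
Proof.
  induction l as [|a l IHl]. simpl; auto. cbn [compl_box].
  apply disj_app. apply disj_compl_c. apply disj_map_app; auto.
  intros x H1 H2. apply UL_compl_c in H1. apply UL_map_app in H2. simpl in H2. tauto.
Qed.

Lemma Lvalid_compl_box l : bvalid n l -> Lvalid n (compl_box l).
Proof.
  induction l as [|a l IHl]; cbn [compl_box]; intros Hv.
  - intros b [].
  - apply Lvalid_app. apply Lvalid_compl_c, Hv; simpl; auto.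
    apply Lvalid_map_app. intros c [Hc|[]]; subst; apply Hv; simpl; auto.
    apply IHl. intros c Hc; apply Hv; simpl; auto.
Qed.

Definition inter (L1 L2 : list (list constr)) : list (list constr) :=
  flat_map (fun b1 => map (fun b2 => b1 ++ b2) L2) L1.

Lemma UL_inter L1 L2 x : UL (inter L1 L2) x <-> UL L1 x /\ UL L2 x.
Proof.
  induction L1; simpl. tauto. rewrite UL_app, UL_map_app. fold (inter L1 L2). rewrite IHL1. tauto.
Qed.

Lemma disj_inter L1 L2 : disj L1 -> disj L2 -> disj (inter L1 L2).
Proof.
  induction L1; simpl; auto. intros [H1 H2] HL2. fold (inter L1 L2).
  apply disj_app. apply disj_map_app; auto. apply IHL1; auto.
  intros x Ha Hb. apply UL_map_app in Ha. apply UL_inter in Hb. destruct Ha, Hb. eauto.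
Qed.

Lemma Lvalid_inter L1 L2 : Lvalid n L1 -> Lvalid n L2 -> Lvalid n (inter L1 L2).
Proof.
  intros H1 H2 B HB. unfold inter in HB. apply in_flat_map in HB. destruct HB as [b1 [Hb1 HB]].
  apply (Lvalid_map_app b1 L2) in HB; auto.
Qed.

Definition complU (L : list (list constr)) : list (list constr) :=
  fold_right (fun b acc => inter (compl_box b) acc) [[]] L.

Lemma UL_complU L x : UL (complU L) x <-> ~ UL L x.
Proof.
  induction L; simpl. tauto. rewrite UL_inter, UL_compl_box. fold (complU L). rewrite IHL. tauto.
Qed.

Lemma disj_complU L : disj (complU L).
Proof.
  induction L; simpl. split; auto. apply disj_inter; auto. apply disj_compl_box.
Qed.

Lemma Lvalid_complU L : Lvalid n L -> Lvalid n (complU L).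
Proof.
  induction L; simpl; intros Hv.
  - intros b [Hb|[]]; subst. intros c [].
  - apply Lvalid_inter. apply Lvalid_compl_box, Hv; simpl; auto. apply IHL. intros b Hb; apply Hv; simpl; auto.
Qed.

Definition unionU L1 L2 := complU (inter (complU L1) (complU L2)).

Lemma UL_unionU L1 L2 x : UL (unionU L1 L2) x <-> UL L1 x \/ UL L2 x.
Proof.
  unfold unionU. rewrite UL_complU, UL_inter, !UL_complU. tauto.
Qed.

Lemma disj_unionU L1 L2 : disj (unionU L1 L2).
Proof. apply disj_complU. Qed.

Lemma Lvalid_unionU L1 L2 : Lvalid n L1 -> Lvalid n L2 -> Lvalid n (unionU L1 L2).
Proof. intros. apply Lvalid_complU, Lvalid_inter; apply Lvalid_complU; auto. Qed.

End Boxes.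

Fixpoint rl_i (k : nat) (a b : vseq) (N : nat) : list constr :=
  match N with O => [] | S N' => (k, N', Some (a k N'), Some (b k N')) :: rl_i k a b N' end.
Fixpoint rl (n : nat) (a b : vseq) (K : nat) : list constr :=
  match K with O => [] | S K' => rl_i K' a b n ++ rl n a b K' end.

Lemma boxs_rl_i k a b N x : boxs (rl_i k a b N) x <-> forall i, (i < N)%nat -> a k i < x k i <= b k i.
Proof.
  induction N; simpl. split; intros; auto; lia.
  rewrite IHN. split.
  - intros [[H1 H2] H3] i Hi. destruct (Nat.eq_dec i N). subst; auto. apply H3; lia.
  - intros H. split. apply H; lia. intros; apply H; lia.
Qed.

Lemma boxs_rl n a b K x : boxs (rl n a b K) x <-> rect n K a b x.
Proof.
  unfold rect. induction K; simpl. split; intros; auto; lia.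
  rewrite boxs_app, boxs_rl_i, IHK. split.
  - intros [H1 H2] k i Hk Hi. destruct (Nat.eq_dec k K). subst; auto. apply H2; auto; lia.
  - intros H. split. intros; apply H; auto. intros; apply H; auto.
Qed.


Lemma bvalid_rl_i n k a b N : (N <= n)%nat -> bvalid n (rl_i k a b N).
Proof.
  induction N; simpl; intros HN c Hc. destruct Hc.
  destruct Hc as [Hc|Hc]. subst; simpl; lia. apply IHN; auto; lia.
Qed.

Lemma bvalid_rl n a b K : bvalid n (rl n a b K).
Proof.
  induction K; simpl. intros c [].
  intros c Hc. apply in_app_iff in Hc. destruct Hc; auto. apply (bvalid_rl_i n K a b n); auto.
Qed.

Definition sd (X Y : vseq -> Prop) : vseq -> Prop := fun x => (X x /\ ~ Y x) \/ (Y x /\ ~ X x).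

Lemma borel_sd n X Y : borel n X -> borel n Y -> borel n (sd X Y).
Proof. intros. unfold sd. apply borel_or; apply borel_and; auto; apply borel_compl; auto. Qed.

Section Ext.
Variable n : nat.
Variables mu nu : (vseq -> Prop) -> R.
Hypothesis Hmu : is_meas n mu.
Hypothesis Hnu : is_meas n nu.
Hypothesis Hbox : forall b, bvalid n b -> mu (boxs b) <= nu (boxs b).

Lemma le_UL L : Lvalid n L -> disj L -> mu (UL L) <= nu (UL L).
Proof.
  induction L as [|b L IH]; intros Hv Hd.
  - simpl. replace (UL []) with (fun _ : vseq => False) by (apply set_ext; simpl; tauto).
    rewrite (meas_empty n mu), (meas_empty n nu); auto. lra.
  - replace (UL (b :: L)) with (fun x => boxs b x \/ UL L x) by (apply set_ext; simpl; tauto).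
    destruct Hd as [Hd1 Hd2].
    assert (Hvb : bvalid n b) by (apply Hv; simpl; auto).
    assert (HvL : Lvalid n L) by (intros b' Hb'; apply Hv; simpl; auto).
    rewrite (meas_add2 n mu), (meas_add2 n nu); auto; try apply borel_boxs; try apply borel_UL; auto.
    specialize (Hbox b Hvb). specialize (IH HvL Hd2). lra.
Qed.

Definition Good (E : vseq -> Prop) : Prop :=
  borel n E /\ forall eps, 0 < eps -> exists L, Lvalid n L /\ disj L /\
     mu (sd E (UL L)) < eps /\ nu (sd E (UL L)) < eps.

Lemma sd_empty_meas m X Y : is_meas n m -> (forall x, X x <-> Y x) -> m (sd X Y) = 0.
Proof.
  intros Hm H. rewrite (meas_ext m (sd X Y) (fun _ => False)). apply (meas_empty n); auto.
  intros x; unfold sd; rewrite H; tauto.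
Qed.

Lemma Good_boxs b : bvalid n b -> Good (boxs b).
Proof.
  intros Hb. split. apply borel_boxs; auto.
  intros eps Heps. exists [b]. split; [|split; [|split]].
  - intros b' [E|[]]; subst; auto.
  - simpl. split; auto.
  - rewrite sd_empty_meas; auto. intros x; simpl; tauto.
  - rewrite sd_empty_meas; auto. intros x; simpl; tauto.
Qed.

Lemma Good_compl E : Good E -> Good (fun x => ~ E x).
Proof.
  intros [HE HG]. split. apply borel_compl; auto.
  intros eps Heps. destruct (HG eps Heps) as [L [Hv [Hd [H1 H2]]]].
  exists (complU L). split; [apply Lvalid_complU; auto|split; [apply disj_complU|]].
  assert (Hs : sd (fun x => ~ E x) (UL (complU L)) = sd E (UL L)).
  { apply set_ext. intros x. unfold sd. rewrite UL_complU.
    destruct (Classical_Prop.classic (E x)); destruct (Classical_Prop.classic (UL L x)); tauto. }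
  rewrite Hs; auto.
Qed.

Lemma meas_sd_triangle m A B C D : is_meas n m -> borel n A -> borel n B -> borel n C -> borel n D ->
  (forall x, sd A B x -> sd C D x \/ (fun x => A x /\ ~ C x) x) ->
  m (sd A B) <= m (sd C D) + m (fun x => A x /\ ~ C x).
Proof.
  intros Hm HA HB HC HD H.
  apply Rle_trans with (m (fun x => sd C D x \/ (fun x => A x /\ ~ C x) x)).
  apply (meas_mono n); auto. apply borel_sd; auto. apply borel_or. apply borel_sd; auto.
  apply borel_and; auto. apply borel_compl; auto.
  apply (meas_sub n); auto. apply borel_sd; auto. apply borel_and; auto. apply borel_compl; auto.
Qed.

Lemma Good_Ufin (E : nat -> vseq -> Prop) : (forall j, Good (E j)) ->
  forall M eps, 0 < eps -> exists L, Lvalid n L /\ disj L /\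
     mu (sd (Ufin E M) (UL L)) < eps /\ nu (sd (Ufin E M) (UL L)) < eps.
Proof.
  intros HE. assert (HEb : forall j, borel n (E j)) by (intros j; apply HE).
  induction M; intros eps Heps.
  - exists []. split; [intros b []|split; [simpl; auto|]].
    split; [rewrite (sd_empty_meas mu)|rewrite (sd_empty_meas nu)]; auto; try lra.
    all: intros x; unfold Ufin; simpl; split; [intros [j [Hj _]]; lia|tauto].
  - destruct (IHM (eps/2)) as [L1 [Hv1 [Hd1 [H11 H12]]]]; [lra|].
    destruct (proj2 (HE M) (eps/2)) as [L2 [Hv2 [Hd2 [H21 H22]]]]; [lra|].
    exists (unionU L1 L2). split; [apply Lvalid_unionU; auto|split; [apply disj_unionU|]].
    assert (Hincl : forall x, sd (Ufin E (S M)) (UL (unionU L1 L2)) x ->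
              (fun x => sd (Ufin E M) (UL L1) x \/ sd (E M) (UL L2) x) x).
    { intros x. unfold sd, Ufin. rewrite UL_unionU. intros H.
      destruct H as [[[j [Hj Hx]] H]|[H1 H2]].
      - assert (j < M \/ j = M)%nat as [Hl|Hl] by lia. left. left. split. exists j; split; auto. tauto.
        subst. right. left. split; auto; tauto.
      - destruct H1 as [H1|H1].
        + left. right. split; auto. intros [j [Hj Hx]]. apply H2. exists j; split; auto; lia.
        + right. right. split; auto. intros Hx. apply H2. exists M; split; auto; lia. }
    assert (Hb : forall m, is_meas n m -> m (sd (Ufin E (S M)) (UL (unionU L1 L2))) <=
              m (sd (Ufin E M) (UL L1)) + m (sd (E M) (UL L2))).
    { intros m Hm. eapply Rle_trans. apply (meas_mono n m Hm _ (fun x => sd (Ufin E M) (UL L1) x \/ sd (E M) (UL L2) x)); [| |exact Hincl].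
      apply borel_sd. apply borel_Ufin; auto. apply borel_UL, Lvalid_unionU; auto.
      apply borel_or; apply borel_sd; auto; try apply borel_Ufin; auto; apply borel_UL; auto.
      apply (meas_sub n); auto; apply borel_sd; auto; try apply borel_Ufin; auto; apply borel_UL; auto. }
    pose proof (Hb mu Hmu). pose proof (Hb nu Hnu). split; lra.
Qed.

Lemma Ufin_mono E M1 M2 x : (M1 <= M2)%nat -> Ufin E M1 x -> Ufin E M2 x.
Proof. intros H [j [Hj Hx]]. exists j; split; auto; lia. Qed.

Lemma cont_tail m (E : nat -> vseq -> Prop) : is_meas n m -> (forall j, borel n (E j)) ->
  forall eps, 0 < eps -> exists M0, forall M, (M0 <= M)%nat ->
    m (fun x => (fun x => exists j, E j x) x /\ ~ Ufin E M x) < eps.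
Proof.
  intros Hm HE eps Heps. destruct (meas_cont n m Hm E HE eps Heps) as [M0 HM0].
  exists M0. intros M HM.
  assert (Hsplit : m (fun x => exists j, E j x) =
     m (Ufin E M) + m (fun x => (fun x => exists j, E j x) x /\ ~ Ufin E M x)).
  { rewrite <- (meas_add2 n m Hm). apply (meas_ext m). intros x; split.
    intros H. destruct (Classical_Prop.classic (Ufin E M x)); tauto.
    intros [[j [_ Hj]]|[H _]]; eauto.
    apply borel_Ufin; auto. apply borel_and. apply borel_Union; auto. apply borel_compl, borel_Ufin; auto.
    intros x H [_ H']; auto. }
  assert (m (Ufin E M0) <= m (Ufin E M)).
  { apply (meas_mono n m Hm); try apply borel_Ufin; auto. intros x; apply Ufin_mono; auto. }
  lra.
Qed.

Lemma Good_Union (E : nat -> vseq -> Prop) : (forall j, Good (E j)) -> Good (fun x => exists j, E j x).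
Proof.
  intros HE. assert (HEb : forall j, borel n (E j)) by (intros j; apply HE).
  split. apply borel_Union; auto.
  intros eps Heps.
  destruct (cont_tail mu E Hmu HEb (eps/2)) as [M1 HM1]; [lra|].
  destruct (cont_tail nu E Hnu HEb (eps/2)) as [M2 HM2]; [lra|].
  set (M := Nat.max M1 M2).
  destruct (Good_Ufin E HE M (eps/2)) as [L [Hv [Hd [H1 H2]]]]; [lra|].
  exists L. split; auto. split; auto.
  assert (Hb : forall m, is_meas n m -> m (sd (fun x => exists j, E j x) (UL L)) <=
              m (sd (Ufin E M) (UL L)) + m (fun x => (fun x => exists j, E j x) x /\ ~ Ufin E M x)).
  { intros m Hm. apply meas_sd_triangle; auto. apply borel_Union; auto. apply borel_UL; auto.
    apply borel_Ufin; auto. apply borel_UL; auto.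
    intros x. unfold sd. intros [[Hx HL]|[HL Hx]].
    - destruct (Classical_Prop.classic (Ufin E M x)); tauto.
    - left. right. split; auto. intros [j [_ Hj]]. eauto. }
  pose proof (Hb mu Hmu). pose proof (Hb nu Hnu).
  pose proof (HM1 M ltac:(unfold M; lia)). pose proof (HM2 M ltac:(unfold M; lia)).
  split; lra.
Qed.


Lemma Good_ext E F : Good E -> (forall x, E x <-> F x) -> Good F.
Proof. intros H HE. replace F with E; auto. apply set_ext; auto. Qed.

Lemma borel_Good E : borel n E -> Good E.
Proof.
  intros HE. apply HE.
  - split; [|split].
    + apply Good_ext with (boxs []). apply Good_boxs. intros c []. intros; simpl; tauto.
    + apply Good_compl.
    + apply Good_Union.
  - intros K a b. apply Good_ext with (boxs (rl n a b K)). apply Good_boxs, bvalid_rl.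
    intros x; apply boxs_rl.
Qed.

Theorem meas_le_ext E : borel n E -> mu E <= nu E.
Proof.
  intros HE. destruct (borel_Good E HE) as [_ HG].
  destruct (Rle_dec (mu E) (nu E)) as [|Hn]; auto. exfalso.
  set (eps := (mu E - nu E) / 4).
  destruct (HG eps) as [L [Hv [Hd [H1 H2]]]]; [unfold eps; lra|].
  assert (HUL : borel n (UL L)) by (apply borel_UL; auto).
  assert (Hsd : borel n (sd E (UL L))) by (apply borel_sd; auto).
  assert (A1 : mu E <= mu (UL L) + mu (sd E (UL L))).
  { eapply Rle_trans; [|apply (meas_sub n mu Hmu); auto].
    apply (meas_mono n mu Hmu); auto. apply borel_or; auto.
    intros x Hx. unfold sd. destruct (Classical_Prop.classic (UL L x)); tauto. }
  assert (A2 : nu (UL L) <= nu E + nu (sd E (UL L))).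
  { eapply Rle_trans; [|apply (meas_sub n nu Hnu); auto].
    apply (meas_mono n nu Hnu); auto. apply borel_or; auto.
    intros x Hx. unfold sd. destruct (Classical_Prop.classic (E x)); tauto. }
  pose proof (le_UL L Hv Hd). unfold eps in *. lra.
Qed.

End Ext.

Definition Kof (l : list constr) : nat :=
  fold_right (fun (c : constr) acc => let '(k, _, _, _) := c in Nat.max (S k) acc) O l.

Definition matchc (c : constr) (k i : nat) : bool :=
  let '(k', i', _, _) := c in andb (Nat.eqb k' k) (Nat.eqb i' i).

Definition afold (l : list constr) (k i : nat) (init : R) : R :=
  fold_right (fun (c : constr) acc => if matchc c k i then
     match c with (_, _, Some a, _) => Rmax a acc | _ => acc end else acc) init l.
Definition bfold (l : list constr) (k i : nat) (init : R) : R :=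
  fold_right (fun (c : constr) acc => if matchc c k i then
     match c with (_, _, _, Some b) => Rmin b acc | _ => acc end else acc) init l.

Lemma Rmax_mono a x y : x <= y -> Rmax a x <= Rmax a y.
Proof. intros. unfold Rmax. destruct (Rle_dec a x); destruct (Rle_dec a y); lra. Qed.
Lemma Rmin_mono a x y : x <= y -> Rmin a x <= Rmin a y.
Proof. intros. unfold Rmin. destruct (Rle_dec a x); destruct (Rle_dec a y); lra. Qed.

Lemma afold_mono l k i x y : x <= y -> afold l k i x <= afold l k i y.
Proof.
  intros H. unfold afold in *. induction l as [|[[[k' i'] lo] hi] l IH]; simpl; auto.
  destruct ((k' =? k) && (i' =? i))%bool; auto. destruct lo; cbn; auto. apply Rmax_mono; auto.
Qed.
Lemma bfold_mono l k i x y : x <= y -> bfold l k i x <= bfold l k i y.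
Proof.
  intros H. unfold bfold in *. induction l as [|[[[k' i'] lo] hi] l IH]; simpl; auto.
  destruct ((k' =? k) && (i' =? i))%bool; auto. destruct hi; cbn; auto. apply Rmin_mono; auto.
Qed.

Lemma afold_ge l k i init a hi : In (k, i, Some a, hi) l -> a <= afold l k i init.
Proof.
  unfold afold, matchc. induction l as [|c l IH]; simpl. tauto.
  intros [E|H].
  - subst. simpl. rewrite !Nat.eqb_refl. simpl. apply Rmax_l.
  - destruct c as [[[k' i'] lo] hi']. simpl. destruct (andb _ _); auto.
    destruct lo; auto. eapply Rle_trans; [apply IH; auto|apply Rmax_r].
Qed.
Lemma bfold_le l k i init b lo : In (k, i, lo, Some b) l -> bfold l k i init <= b.
Proof.
  unfold bfold, matchc. induction l as [|c l IH]; simpl. tauto.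
  intros [E|H].
  - subst. simpl. rewrite !Nat.eqb_refl. simpl. apply Rmin_l.
  - destruct c as [[[k' i'] lo'] hi']. simpl. destruct (andb _ _); auto.
    destruct hi'; auto. eapply Rle_trans; [apply Rmin_r|apply IH; auto].
Qed.

Lemma afold_lt l k i init t x : init < t -> boxs l x -> t = x k i -> afold l k i init < t.
Proof.
  intros Hi Hb Ht. unfold afold, bfold, matchc in *. induction l as [|c l IH]; simpl; auto.
  destruct Hb as [Hc Hb]. destruct c as [[[k' i'] lo] hi]. simpl.
  destruct (andb (Nat.eqb k' k) (Nat.eqb i' i)) eqn:Em; auto.
  apply Bool.andb_true_iff in Em. destruct Em as [E1 E2]. apply Nat.eqb_eq in E1, E2. subst.
  destruct lo; auto. apply Rmax_lub_lt; auto. simpl in Hc. tauto.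
Qed.
Lemma bfold_ge l k i init t x : t <= init -> boxs l x -> t = x k i -> t <= bfold l k i init.
Proof.
  intros Hi Hb Ht. unfold afold, bfold, matchc in *. induction l as [|c l IH]; simpl; auto.
  destruct Hb as [Hc Hb]. destruct c as [[[k' i'] lo] hi]. simpl.
  destruct (andb (Nat.eqb k' k) (Nat.eqb i' i)) eqn:Em; auto.
  apply Bool.andb_true_iff in Em. destruct Em as [E1 E2]. apply Nat.eqb_eq in E1, E2. subst.
  destruct hi; auto. apply Rmin_glb; auto. simpl in Hc. tauto.
Qed.

Lemma Kof_cons k i lo hi l : Kof ((k, i, lo, hi) :: l) = Nat.max (S k) (Kof l).
Proof. reflexivity. Qed.

Lemma Kof_gt l k i lo hi : In (k, i, lo, hi) l -> (k < Kof l)%nat.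
Proof.
  induction l as [|c l IH]. simpl; tauto.
  destruct c as [[[k' i'] lo'] hi']. rewrite Kof_cons.
  intros [E|H]. inversion E; subst. lia. specialize (IH H). lia.
Qed.

Definition RM (n : nat) (l : list constr) (M : nat) : vseq -> Prop :=
  rect n (Kof l) (fun k i => afold l k i (- INR M)) (fun k i => bfold l k i (INR M)).

Lemma RM_sub n l M x : bvalid n l -> RM n l M x -> boxs l x.
Proof.
  intros Hv HR.
  assert (H : forall c, In c l -> sat c x).
  { intros [[[k i] lo] hi] Hc. pose proof (Hv _ Hc) as Hi. simpl in Hi.
    destruct (HR k i (Kof_gt _ _ _ _ _ Hc) Hi) as [H1 H2]. simpl. split.
    - destruct lo as [a|]; auto. pose proof (afold_ge l k i (- INR M) a hi Hc). lra.
    - destruct hi as [b|]; auto. pose proof (bfold_le l k i (INR M) b lo Hc). lra. }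
  clear HR Hv. induction l; simpl; auto. split. apply H; simpl; auto. apply IHl. intros; apply H; simpl; auto.
Qed.

Lemma RM_mono n l M1 M2 x : (M1 <= M2)%nat -> RM n l M1 x -> RM n l M2 x.
Proof.
  intros HM HR k i Hk Hi. destruct (HR k i Hk Hi) as [H1 H2].
  assert (INR M1 <= INR M2) by (apply le_INR; auto).
  pose proof (afold_mono l k i (- INR M2) (- INR M1) ltac:(lra)).
  pose proof (bfold_mono l k i (INR M1) (INR M2) ltac:(lra)).
  split; lra.
Qed.

Lemma box_Union_RM n l x : boxs l x -> exists M, RM n l M x.
Proof.
  intros Hb. destruct (bound_fin x (Kof l) n) as [M HM]. exists M.
  intros k i Hk Hi. specialize (HM k i Hk Hi). apply Rabs_def2 in HM.
  split. apply afold_lt with x; auto; lra. apply bfold_ge with x; auto; lra.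
Qed.

Section BoxFromRect.
Variable n : nat.
Variables mu nu : (vseq -> Prop) -> R.
Hypothesis Hmu : is_meas n mu.
Hypothesis Hnu : is_meas n nu.
Hypothesis Hrect : forall K a b, mu (rect n K a b) <= nu (rect n K a b).

Lemma box_le l : bvalid n l -> mu (boxs l) <= nu (boxs l).
Proof.
  intros Hv.
  assert (HU : boxs l = (fun x => exists M, RM n l M x)).
  { apply set_ext. intros x; split. apply box_Union_RM. intros [M HM]. eapply RM_sub; eauto. }
  assert (HRb : forall M, borel n (RM n l M)) by (intros; apply borel_rect).
  destruct (Rle_dec (mu (boxs l)) (nu (boxs l))) as [|Hn]; auto. exfalso.
  set (eps := mu (boxs l) - nu (boxs l)).
  destruct (meas_cont n mu Hmu (RM n l) HRb eps) as [M0 HM0]; [unfold eps; lra|].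
  rewrite <- HU in HM0.
  assert (H1 : mu (Ufin (RM n l) M0) <= mu (RM n l M0)).
  { apply (meas_mono n mu Hmu). apply borel_Ufin; auto. auto.
    intros x [j [Hj Hx]]. apply RM_mono with j; auto; lia. }
  assert (H2 : nu (RM n l M0) <= nu (boxs l)).
  { apply (meas_mono n nu Hnu); auto. apply borel_boxs; auto. intros x; apply RM_sub; auto. }
  pose proof (Hrect (Kof l) (fun k i => afold l k i (- INR M0)) (fun k i => bfold l k i (INR M0))).
  fold (RM n l M0) in H. unfold eps in *. lra.
Qed.

End BoxFromRect.

Lemma exp_le x y : x <= y -> exp x <= exp y.
Proof. intros [H|H]. left; apply exp_increasing; auto. subst; lra. Qed.

Lemma exp_ge1 x : 0 <= x -> 1 <= exp x.
Proof. intros H. rewrite <- exp_0. apply exp_le; auto. Qed.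

Definition monoI (P : R -> Prop) (G : R -> R) := forall a b, P a -> P b -> a <= b -> G a <= G b.

Lemma glue G p q : p <= q -> monoI (fun t => t <= p) G -> monoI (fun t => p <= t <= q) G ->
  monoI (fun t => q <= t) G -> forall a b, a <= b -> G a <= G b.
Proof.
  intros Hpq H1 H2 H3 a b Hab.
  destruct (Rle_dec a p); destruct (Rle_dec b p).
  - apply H1; auto.
  - destruct (Rle_dec b q).
    + apply Rle_trans with (G p). apply H1; lra. apply H2; lra.
    + apply Rle_trans with (G p). apply H1; lra. apply Rle_trans with (G q). apply H2; lra. apply H3; lra.
  - lra.
  - destruct (Rle_dec a q); destruct (Rle_dec b q).
    + apply H2; lra.
    + apply Rle_trans with (G q). apply H2; lra. apply H3; lra.
    + lra.
    + apply H3; lra.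
Qed.

Section Lap.
Variable beta : R.
Hypothesis Hb : 0 < beta.

Lemma lap_neg t : t <= 0 -> laplace_cdf beta t = exp (t / beta) / 2.
Proof.
  intros Ht. unfold laplace_cdf. destruct (Rlt_dec t 0); auto.
  assert (t = 0) by lra. subst. replace (- 0 / beta) with 0 by (field; lra).
  replace (0 / beta) with 0 by (field; lra). rewrite exp_0. lra.
Qed.

Lemma lap_pos t : 0 <= t -> laplace_cdf beta t = 1 - exp (- t / beta) / 2.
Proof. intros Ht. unfold laplace_cdf. destruct (Rlt_dec t 0); auto. lra. Qed.

Lemma exp_div_plus t d : exp ((t + d) / beta) = exp (t / beta) * exp (d / beta).
Proof. rewrite <- exp_plus. f_equal. field. lra. Qed.

Lemma exp_neg_div t : exp (- t / beta) = / exp (t / beta).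
Proof. rewrite <- exp_Ropp. f_equal. field. lra. Qed.

Lemma lap_mono a b : a <= b -> laplace_cdf beta a <= laplace_cdf beta b.
Proof.
  intros Hab.
  assert (Hl : forall x y, x <= y -> exp (x / beta) <= exp (y / beta)).
  { intros x y Hxy. apply exp_le. unfold Rdiv. apply Rmult_le_compat_r; [left; apply Rinv_0_lt_compat; auto|auto]. }
  destruct (Rle_dec b 0).
  - rewrite !lap_neg by lra. pose proof (Hl a b Hab). lra.
  - destruct (Rle_dec a 0).
    + rewrite lap_neg, lap_pos by lra. rewrite exp_neg_div.
      pose proof (Hl a 0 r). pose proof (Hl 0 b ltac:(lra)).
      replace (0 / beta) with 0 in * by (field; lra). rewrite exp_0 in *.
      assert (0 < exp (b / beta)) by apply exp_pos.
      assert (/ exp (b / beta) <= 1). { rewrite <- Rinv_1. apply Rinv_le_contravar; lra. }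
      lra.
    + rewrite !lap_pos by lra. rewrite !exp_neg_div. pose proof (Hl a b Hab).
      assert (0 < exp (a / beta)) by apply exp_pos.
      assert (/ exp (b / beta) <= / exp (a / beta)) by (apply Rinv_le_contravar; lra). lra.
Qed.

Lemma inv_diff X Y C : 0 < X -> 0 < Y -> 0 < C -> / (X * C) - / (Y * C) = (Y - X) * / (X * Y * C).
Proof. intros. field. lra. Qed.

Lemma inv_le_of X : 0 < X -> 1 <= X * 1 -> True. Proof. auto. Qed.

Lemma lap_shift d a b : a <= b ->
  laplace_cdf beta (b + d) - laplace_cdf beta (a + d) <=
  exp (Rabs d / beta) * (laplace_cdf beta b - laplace_cdf beta a).
Proof.
  intros Hab.
  assert (Hl : forall x y, x <= y -> exp (x / beta) <= exp (y / beta)).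
  { intros x y Hxy. apply exp_le. unfold Rdiv. apply Rmult_le_compat_r; [left; apply Rinv_0_lt_compat; auto|auto]. }
  assert (Hl' : forall x y, x < y -> exp (x / beta) <= exp (y / beta)) by (intros; apply Hl; lra).
  assert (He : forall x, 0 < exp (x / beta)) by (intros; apply exp_pos).
  assert (HG : forall a b, a <= b -> (fun t => exp (Rabs d / beta) * laplace_cdf beta t - laplace_cdf beta (t + d)) a <= (fun t => exp (Rabs d / beta) * laplace_cdf beta t - laplace_cdf beta (t + d)) b).
  { destruct (Rle_dec 0 d) as [Hd|Hd].
    - rewrite Rabs_pos_eq by lra. set (C := exp (d / beta)).
      assert (HC1 : 1 <= C). { apply exp_ge1. unfold Rdiv. apply Rmult_le_pos; [lra|left; apply Rinv_0_lt_compat; lra]. }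
      apply (glue _ (- d) 0); [lra| | |].
      + intros x y Hx Hy Hxy. simpl in Hx, Hy. cbv beta.
        rewrite !lap_neg by lra. rewrite !exp_div_plus. fold C. lra.
      + intros x y Hx Hy Hxy. simpl in Hx, Hy. cbv beta.
        rewrite (lap_neg x), (lap_neg y), (lap_pos (x + d)), (lap_pos (y + d)) by lra.
        rewrite !exp_neg_div, !exp_div_plus. fold C.
        pose proof (He x). pose proof (He y). pose proof (Hl x y Hxy).
        set (X := exp (x / beta)) in *. set (Y := exp (y / beta)) in *.
        assert (HC : 0 < C) by lra.
        assert (Hk : 1 <= X * Y * C * C).
        { unfold X, Y, C. rewrite <- !exp_plus. apply exp_ge1.
          replace (x / beta + y / beta + d / beta + d / beta) with ((x + y + 2 * d) * / beta) by (field; lra).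
          apply Rmult_le_pos; [lra|left; apply Rinv_0_lt_compat; lra]. }
        assert (Hk' : / (X * Y * C) <= C).
        { apply Rmult_le_reg_r with (X * Y * C). apply Rmult_lt_0_compat; [apply Rmult_lt_0_compat|]; lra.
          rewrite Rinv_l. lra. apply Rgt_not_eq. apply Rmult_lt_0_compat; [apply Rmult_lt_0_compat|]; lra. }
        pose proof (inv_diff X Y C ltac:(lra) ltac:(lra) HC).
        assert ((Y - X) * / (X * Y * C) <= (Y - X) * C) by (apply Rmult_le_compat_l; lra).
        lra.
      + intros x y Hx Hy Hxy. simpl in Hx, Hy. cbv beta.
        rewrite !lap_pos by lra. rewrite !exp_neg_div, !exp_div_plus. fold C.
        pose proof (He x). pose proof (He y). pose proof (Hl x y Hxy).
        set (X := exp (x / beta)) in *. set (Y := exp (y / beta)) in *.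
        assert (HC : 0 < C) by lra.
        rewrite !Rinv_mult.
        assert (/ Y <= / X) by (apply Rinv_le_contravar; lra).
        assert (/ C <= C). { apply Rle_trans with 1; auto. rewrite <- Rinv_1. apply Rinv_le_contravar; lra. }
        assert (0 <= (/ X - / Y) * (C - / C)) by (apply Rmult_le_pos; lra).
        nra.
    - rewrite Rabs_left by lra. set (C := exp (- d / beta)). set (E := exp (d / beta)).
      assert (HCE : E = / C). { unfold E, C. rewrite exp_neg_div; auto. rewrite Rinv_inv. reflexivity. }
      assert (HC1 : 1 <= C). { apply exp_ge1. unfold Rdiv. apply Rmult_le_pos; [lra|left; apply Rinv_0_lt_compat; lra]. }
      assert (HE1 : E <= 1). { rewrite HCE, <- Rinv_1. apply Rinv_le_contravar; lra. }
      assert (HE0 : 0 < E) by apply exp_pos.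
      apply (glue _ 0 (- d)); [lra| | |].
      + intros x y Hx Hy Hxy. simpl in Hx, Hy. cbv beta.
        rewrite !lap_neg by lra. rewrite !exp_div_plus. fold E.
        pose proof (Hl x y Hxy). nra.
      + intros x y Hx Hy Hxy. simpl in Hx, Hy. cbv beta.
        rewrite (lap_pos x), (lap_pos y), (lap_neg (x + d)), (lap_neg (y + d)) by lra.
        rewrite !exp_neg_div, !exp_div_plus. fold E.
        pose proof (He x). pose proof (He y). pose proof (Hl x y Hxy).
        set (X := exp (x / beta)) in *. set (Y := exp (y / beta)) in *.
        assert (Hk : E * X * Y <= C).
        { unfold X, Y, E, C. rewrite <- !exp_plus. apply exp_le.
          replace (d / beta + x / beta + y / beta) with ((x + y + d) * / beta) by (field; lra).
          replace (- d / beta) with ((- d) * / beta) by (field; lra).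
          apply Rmult_le_compat_r; [left; apply Rinv_0_lt_compat; lra|lra]. }
        assert (Hid : / X - / Y = (Y - X) * / (X * Y)) by (field; lra).
        assert (Hk' : E <= C * / (X * Y)).
        { apply Rmult_le_reg_r with (X * Y). apply Rmult_lt_0_compat; lra.
          rewrite Rmult_assoc, Rinv_l. lra. apply Rgt_not_eq. apply Rmult_lt_0_compat; lra. }
        assert ((Y - X) * E <= (Y - X) * (C * / (X * Y))) by (apply Rmult_le_compat_l; lra).
        nra.
      + intros x y Hx Hy Hxy. simpl in Hx, Hy. cbv beta.
        rewrite !lap_pos by lra. rewrite !exp_neg_div, !exp_div_plus. fold E.
        rewrite HCE. pose proof (He x). pose proof (He y).
        assert (0 < C) by lra.
        rewrite !Rinv_mult, !Rinv_inv. lra. }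
  specialize (HG a b Hab). cbv beta in HG. lra.
Qed.

End Lap.

Lemma rprod_nonneg N u : (forall j, (j < N)%nat -> 0 <= u j) -> 0 <= rprod N u.
Proof. induction N; simpl; intros H. lra. apply Rmult_le_pos. apply IHN; intros; apply H; lia. apply H; lia. Qed.

Lemma rprod_le N u v w : (forall j, (j < N)%nat -> 0 <= u j <= w j * v j) ->
  (forall j, (j < N)%nat -> 0 <= v j) -> (forall j, (j < N)%nat -> 0 <= w j) ->
  rprod N u <= rprod N w * rprod N v.
Proof.
  induction N; simpl; intros Hu Hv Hw. lra.
  assert (H1 : rprod N u <= rprod N w * rprod N v) by (apply IHN; intros; [apply Hu|apply Hv|apply Hw]; lia).
  assert (0 <= rprod N u) by (apply rprod_nonneg; intros; apply Hu; lia).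
  destruct (Hu N ltac:(lia)).
  replace (rprod N w * w N * (rprod N v * v N)) with ((rprod N w * rprod N v) * (w N * v N)) by ring.
  apply Rmult_le_compat; auto.
Qed.

Lemma rprod_ind N i0 c : rprod N (fun i => if Nat.eqb i i0 then c else 1) = if Nat.ltb i0 N then c else 1.
Proof.
  induction N. destruct i0; reflexivity.
  cbn [rprod]. rewrite IHN. destruct (Nat.eq_dec N i0) as [E|E].
  - subst. rewrite Nat.eqb_refl. destruct (Nat.ltb_spec i0 i0), (Nat.ltb_spec i0 (S i0)); try lia; ring.
  - rewrite (proj2 (Nat.eqb_neq _ _) E). destruct (Nat.ltb_spec i0 N), (Nat.ltb_spec i0 (S N)); try lia; ring.
Qed.

Lemma rprod_exp K f : rprod K (fun k => exp (f k)) = exp (rsum K f).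
Proof. induction K; simpl. rewrite exp_0; auto. rewrite IHK, exp_plus; auto. Qed.

Lemma rsum_geom K r : rsum K (fun k => r ^ k) * (1 - r) = 1 - r ^ K.
Proof. induction K; simpl. ring. rewrite Rmult_plus_distr_r, IHK. ring. Qed.

Lemma rsum_scal K c f : rsum K (fun k => c * f k) = c * rsum K f.
Proof. induction K; simpl. ring. rewrite IHK; ring. Qed.

Lemma rsum_ext K f g : (forall k, (k < K)%nat -> f k = g k) -> rsum K f = rsum K g.
Proof. induction K; simpl; intros H; auto. rewrite IHK, H; auto. Qed.

Lemma rprod_ext K f g : (forall k, (k < K)%nat -> f k = g k) -> rprod K f = rprod K g.
Proof. induction K; simpl; intros H; auto. rewrite IHK, H; auto. Qed.

Lemma rmax_ge n f i0 : (i0 < n)%nat -> f i0 <= rmax_upto n f.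
Proof.
  induction n; simpl; intros H. lia.
  destruct (Nat.eq_dec i0 n). subst; apply Rmax_r.
  eapply Rle_trans; [apply IHn; lia|apply Rmax_l].
Qed.

Lemma sum_f_R0_scal C s N : sum_f_R0 (fun k => C * s k) N = C * sum_f_R0 s N.
Proof. induction N; simpl; auto. rewrite IHN; ring. Qed.

Lemma inf_sum_scal C s l : 0 < C -> infinite_sum s l -> infinite_sum (fun k => C * s k) (C * l).
Proof.
  intros HC Hs eps Heps. destruct (Hs (eps / C)) as [N HN].
  apply Rdiv_lt_0_compat; auto.
  exists N. intros m Hm. specialize (HN m Hm). rewrite sum_f_R0_scal. unfold Rdist in *.
  rewrite <- Rmult_minus_distr_l, Rabs_mult, Rabs_pos_eq by lra.
  apply Rmult_lt_reg_r with (/ C). apply Rinv_0_lt_compat; auto.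
  replace (C * Rabs (sum_f_R0 s m - l) * / C) with (Rabs (sum_f_R0 s m - l)) by (field; lra). exact HN.
Qed.

Section Main.
Variable n : nat.
Variable A : nat -> nat -> R.
Variable h : R.
Variables s : nat -> R.

Lemma theta_mf t0 k i : (i < n)%nat -> mf n (fun eta => theta n A h s t0 eta k i).
Proof.
  revert i. induction k; intros i Hi.
  - simpl. apply mf_const.
  - apply mf_ext with (fun eta => theta n A h s t0 eta k i -
        h * (degree n A i * (theta n A h s t0 eta k i + eta k i) -
             rsum n (fun j => A i j * (theta n A h s t0 eta k j + eta k j))) + s i * eta k i).
    + apply mf_plus. apply mf_minus. apply IHk; auto.
      apply mf_scal. apply mf_minus. apply mf_scal. apply mf_plus. apply IHk; auto. apply mf_coord; auto.
      apply (mf_rsum n n (fun eta j => A i j * (theta n A h s t0 eta k j + eta k j))).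
      intros j Hj. apply mf_scal. apply mf_plus. apply IHk; auto. apply mf_coord; auto.
      apply mf_scal. apply mf_coord; auto.
    + intros eta. reflexivity.
Qed.

Lemma Xmap_mf t0 k i : (i < n)%nat -> mf n (fun eta => Xmap n A h s t0 eta k i).
Proof. intros Hi. unfold Xmap. apply mf_plus. apply theta_mf; auto. apply mf_coord; auto. Qed.

Variables t1 t2 : vec.
Definition Dsh (k i : nat) : R := (1 - s i) ^ k * (t2 i - t1 i).
Definition tau (eta : vseq) : vseq := fun k i => eta k i - Dsh k i.

Lemma theta_shift eta k : theta n A h s t2 (tau eta) k = fun i => theta n A h s t1 eta k i + Dsh k i.
Proof.
  induction k.
  - simpl. apply functional_extensionality; intros i. unfold Dsh. simpl. ring.
  - simpl. rewrite IHk.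
    replace (fun i => theta n A h s t1 eta k i + Dsh k i + tau eta k i) with
            (fun i => theta n A h s t1 eta k i + eta k i)
      by (apply functional_extensionality; intros i; unfold tau; ring).
    apply functional_extensionality; intros i. unfold tau, Dsh. simpl. ring.
Qed.

Lemma Xmap_shift eta : Xmap n A h s t1 eta = Xmap n A h s t2 (tau eta).
Proof.
  apply functional_extensionality; intro k; apply functional_extensionality; intro i.
  unfold Xmap. rewrite theta_shift. cbv beta. unfold tau. ring.
Qed.

Lemma tau_mf k i : (i < n)%nat -> mf n (fun eta => tau eta k i).
Proof. intros Hi. unfold tau. apply mf_minus. apply mf_coord; auto. apply mf_const. Qed.

End Main.

Lemma Rdiv_le_0_compat a b : 0 <= a -> 0 < b -> 0 <= a / b.
Proof. intros. unfold Rdiv. apply Rmult_le_pos; auto. left; apply Rinv_0_lt_compat; auto. Qed.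

Lemma geom_bound K r : 0 <= r < 1 -> rsum K (fun k => r ^ k) <= / (1 - r).
Proof.
  intros Hr. pose proof (rsum_geom K r). pose proof (pow_le r K (proj1 Hr)).
  apply Rmult_le_reg_r with (1 - r). lra. rewrite H, Rinv_l by lra. lra.
Qed.

Lemma eps_bound (delta cc qq ss Dl : R) K : 0 < cc -> Rabs (ss - 1) < qq -> Rabs Dl <= delta ->
  rsum K (fun k => Rabs ((1 - ss) ^ k * Dl) / (cc * qq ^ k)) <= delta * qq / (cc * (qq - Rabs (ss - 1))).
Proof.
  intros Hc Hq HD.
  assert (Hq0 : 0 < qq) by (pose proof (Rabs_pos (ss - 1)); lra).
  set (r := Rabs (1 - ss) / qq).
  assert (Hr : 0 <= r < 1).
  { unfold r. rewrite Rabs_minus_sym. split. apply Rdiv_le_0_compat; [apply Rabs_pos|lra].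
    apply Rmult_lt_reg_r with qq; auto. unfold Rdiv. rewrite Rmult_assoc, Rinv_l by lra. lra. }
  rewrite (rsum_ext K _ (fun k => (Rabs Dl / cc) * r ^ k)).
  2:{ intros k _. unfold r. rewrite Rabs_mult, <- RPow_abs. unfold Rdiv. rewrite Rpow_mult_distr, pow_inv.
      assert (qq ^ k <> 0) by (apply pow_nonzero; lra). field. split; lra. }
  rewrite rsum_scal.
  apply Rle_trans with ((delta / cc) * / (1 - r)).
  - apply Rmult_le_compat. apply Rdiv_le_0_compat; [apply Rabs_pos|lra].
    clear -Hr. induction K; simpl. lra. pose proof (pow_le r K (proj1 Hr)). lra.
    unfold Rdiv. apply Rmult_le_compat_r. left; apply Rinv_0_lt_compat; auto. auto.
    apply geom_bound; auto.
  - right. unfold r. rewrite (Rabs_minus_sym 1 ss).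
    assert (qq - Rabs (ss - 1) <> 0) by lra. field. repeat split; lra.
Qed.

Theorem mainTheorem6 (n : nat) (A : nat -> nat -> R) (h : R) (s c q : nat -> R)
  (HA : symmetric_nonneg n A) (Hconn : connected n A)
  (Hh : 0 < h /\ h < 1 / dmax n A)
  (Hs : forall i, (i < n)%nat -> 0 < s i < 2)
  (Hc : forall i, (i < n)%nat -> 0 < c i)
  (Hq : forall i, (i < n)%nat -> Rabs (s i - 1) < q i < 1)
  (P : (vseq -> Prop) -> R) (HP : noise_law n c q P)
  (delta : R) (Hdelta : 0 < delta) :
  (forall (i0 : nat) (t1 t2 : vec) (O : vseq -> Prop),
      (i0 < n)%nat ->
      Rabs (t2 i0 - t1 i0) <= delta ->
      (forall i, (i < n)%nat -> i <> i0 -> t2 i = t1 i) ->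
      borel n O ->
      P (fun eta => O (Xmap n A h s t1 eta))
        <= exp (eps_i delta s c q i0) * P (fun eta => O (Xmap n A h s t2 eta)))
  /\ diff_private n A h s P delta (rmax_upto n (eps_i delta s c q)).
Proof.
  destruct HP as [HP0 [HPadd HPrect]].
  assert (HPm : is_meas n P) by (split; auto).
  assert (Part1 : forall (i0 : nat) (t1 t2 : vec) (O : vseq -> Prop),
      (i0 < n)%nat ->
      Rabs (t2 i0 - t1 i0) <= delta ->
      (forall i, (i < n)%nat -> i <> i0 -> t2 i = t1 i) ->
      borel n O ->
      P (fun eta => O (Xmap n A h s t1 eta))
        <= exp (eps_i delta s c q i0) * P (fun eta => O (Xmap n A h s t2 eta))).
  { intros i0 t1 t2 O Hi0 Hdel Hoth HO.
    set (eps := eps_i delta s c q i0).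
    set (mu := fun E : vseq -> Prop => P (fun eta => E (tau s t1 t2 eta))).
    set (nu := fun E : vseq -> Prop => exp eps * P E).
    assert (Htau : forall E, borel n E -> borel n (fun eta => E (tau s t1 t2 eta))).
    { apply borel_preimage_mf. intros k i Hi. apply tau_mf; auto. }
    assert (Hmu : is_meas n mu).
    { split.
      - intros E HE. apply HP0, Htau, HE.
      - intros F HF Hd. apply (HPadd (fun m eta => F m (tau s t1 t2 eta))).
        intros m; apply Htau; auto. intros m1 m2 x Hne H1 H2. eapply Hd; eauto. }
    assert (Hnu : is_meas n nu).
    { split.
      - intros E HE. unfold nu. apply Rmult_le_pos. left; apply exp_pos. apply HP0; auto.
      - intros F HF Hd. unfold nu. apply inf_sum_scal. apply exp_pos. apply HPadd; auto. }
    assert (Hrect : forall K a b, mu (rect n K a b) <= nu (rect n K a b)).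
    { intros K a b. unfold mu, nu.
      rewrite (set_ext (fun eta => rect n K a b (tau s t1 t2 eta))
                 (rect n K (fun k i => a k i + Dsh s t1 t2 k i) (fun k i => b k i + Dsh s t1 t2 k i))).
      2:{ intros x; unfold rect, tau; split; intros H k i Hk Hi; specialize (H k i Hk Hi); lra. }
      destruct (classic (forall k i, (k < K)%nat -> (i < n)%nat -> a k i <= b k i)) as [Hab|Hab].
      - rewrite !HPrect; auto.
        2:{ intros k i Hk Hi; specialize (Hab k i Hk Hi); lra. }
        assert (Hbeta : forall k i, (i < n)%nat -> 0 < (c i * q i ^ k)).
        { intros k i Hi. apply Rmult_lt_0_compat. apply Hc; auto. apply pow_lt.
          pose proof (Rabs_pos (s i - 1)). pose proof (Hq i Hi). lra. }
        set (w := fun k => exp (Rabs (Dsh s t1 t2 k i0) / (c i0 * q i0 ^ k))).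
        set (v := fun k => rprod n (fun i => laplace_cdf ((c i * q i ^ k)) (b k i) - laplace_cdf ((c i * q i ^ k)) (a k i))).
        apply Rle_trans with (rprod K w * rprod K v).
        + apply (rprod_le K _ v w).
          * intros k Hk. split.
            -- apply rprod_nonneg. intros i Hi. specialize (Hab k i Hk Hi).
               pose proof (lap_mono ((c i * q i ^ k)) (Hbeta k i Hi) (a k i + Dsh s t1 t2 k i) (b k i + Dsh s t1 t2 k i)). lra.
            -- assert (Hw : rprod n (fun i => if Nat.eqb i i0 then w k else 1) = w k).
               { rewrite rprod_ind. destruct (Nat.ltb_spec i0 n); [reflexivity|lia]. }
               unfold v. rewrite <- Hw. apply rprod_le.
               ++ intros i Hi. specialize (Hab k i Hk Hi). split.
                  ** pose proof (lap_mono ((c i * q i ^ k)) (Hbeta k i Hi) (a k i + Dsh s t1 t2 k i) (b k i + Dsh s t1 t2 k i)). lra.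
                  ** destruct (Nat.eqb_spec i i0).
                     --- subst i. unfold w. apply lap_shift; auto.
                     --- unfold Dsh. rewrite (Hoth i Hi n0). replace (t1 i - t1 i) with 0 by ring.
                         rewrite Rmult_0_r, !Rplus_0_r. lra.
               ++ intros i Hi. specialize (Hab k i Hk Hi).
                  pose proof (lap_mono ((c i * q i ^ k)) (Hbeta k i Hi) (a k i) (b k i)). lra.
               ++ intros i Hi. destruct (Nat.eqb i i0). left; apply exp_pos. lra.
          * intros k Hk. apply rprod_nonneg. intros i Hi. specialize (Hab k i Hk Hi).
            pose proof (lap_mono ((c i * q i ^ k)) (Hbeta k i Hi) (a k i) (b k i)). lra.
          * intros k Hk. left; apply exp_pos.
        + apply Rmult_le_compat_r.
          * apply rprod_nonneg. intros k Hk. apply rprod_nonneg. intros i Hi. specialize (Hab k i Hk Hi).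
            pose proof (lap_mono ((c i * q i ^ k)) (Hbeta k i Hi) (a k i) (b k i)). lra.
          * unfold w. rewrite rprod_exp. apply exp_le. unfold eps, eps_i, Dsh.
            apply eps_bound. apply Hc; auto. apply Hq; auto. exact Hdel.
      - apply not_all_ex_not in Hab. destruct Hab as [k Hab].
        apply not_all_ex_not in Hab. destruct Hab as [i Hab].
        assert (Hk : (k < K)%nat) by (apply NNPP; intro; apply Hab; intros; lia).
        assert (Hi : (i < n)%nat) by (apply NNPP; intro; apply Hab; intros; lia).
        assert (Hlt : b k i < a k i) by (apply Rnot_le_lt; intro; apply Hab; intros; auto).
        rewrite (set_ext (rect n K a b) (fun _ => False)).
        rewrite (set_ext (rect n K _ _) (fun _ => False)).
        rewrite (meas_empty n P HPm). lra.
        + intros x; split; [|tauto]. intros H. specialize (H k i Hk Hi). lra.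
        + intros x; split; [|tauto]. intros H. specialize (H k i Hk Hi). lra. }
    pose proof (box_le n mu nu Hmu Hnu Hrect) as Hbox.
    assert (HE : borel n (fun eta => O (Xmap n A h s t2 eta))).
    { apply (borel_preimage_mf n (Xmap n A h s t2)); auto. intros k i Hi; apply Xmap_mf; auto. }
    pose proof (meas_le_ext n mu nu Hmu Hnu Hbox _ HE) as Hle.
    unfold mu, nu in Hle.
    replace (fun eta => O (Xmap n A h s t1 eta)) with (fun eta => O (Xmap n A h s t2 (tau s t1 t2 eta))).
    exact Hle.
    apply functional_extensionality; intros eta. rewrite (Xmap_shift n A h s t1 t2 eta). reflexivity. }
  split; auto.
  intros t1 t2 O [i0 [Hi0 [Hd Ho]]] HO.
  eapply Rle_trans; [apply Part1; eauto|].
  apply Rmult_le_compat_r.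
  - apply HP0. apply (borel_preimage_mf n (Xmap n A h s t2)); auto. intros k i Hi; apply Xmap_mf; auto.
  - apply exp_le, rmax_ge; auto.
Qed.
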